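(* Assume $r_0>-\infty$ and $\mathbb E[(\min\{t_1^+,\dots,t_{2d}^+\})^d]<\infty$. For $\diamond\in\{\text{none},o\}$ and $|\xi|_1=1$, the radial limit $g^\diamond(\xi)=\lim_{t\nearrow1}g^\diamond(t\xi)$ extends both shape functions to all of $\mathcal U$. The resulting functions $g:\mathcal U\to[r_0,\infty]$ and $g^o:\mathcal U\to[r_0\wedge0,\infty]$ are both convex and lower semicontinuous.
   Context: Let $d\ge2$. The edge weights $\{t(e)\}$ on the undirected nearest-neighbor edges of $\mathbb Z^d$ are i.i.d. real, and $t_i$ are i.i.d. copies with $t_i^+=t_i\vee 0$. Set $r_0=\operatorname{ess\,inf}t(e)$, $\mathcal U=\{\xi\in\mathbb R^d:|\xi|_1\le1\}$, and $\operatorname{int}\mathcal U=\{|\xi|_1<1\}$. For paths $(x_0,\dots,x_n)$ with steps in $\mathcal R=\{\pm e_i\}$ (respectively in $\mathcal R^o=\mathcal R\cup\{0\}$, where zero steps have weight $0$), let $G_{0,(n),x}$ (respectively $G^o_{0,(n),x}$) be the minimal passage time over such $n$-step paths from $0$ to $x$. Let $\mathcal D_n$ (respectively $\mathcal D^o_n$) be the set of points reachable by such $n$-step paths. Under the hypotheses, there are deterministic continuous convex functions $g,g^o$ on $\operatorname{int}\mathcal U$ (the restricted path-length shape functions, written $g^\diamond$ with $g^{\text{none}}=g$) such that almost surely, for all $\xi$, all $\alpha>|\xi|_1$ and all $k_n\to\infty$ with $k_n/n\to\alpha$, $x_n\in\mathcal D_{k_n}$, $y_n\in\mathcal D^o_{k_n}$,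 $x_n/n\to\xi$, $y_n/n\to\xi$: $$n^{-1}G_{0,(k_n),x_n}\to\alpha g(\xi/\alpha)\quad\text{and}\quad n^{-1}G^o_{0,(k_n),y_n}\to\alpha g^o(\xi/\alpha).$$ *)

(* Defs.v *)
From HB Require Import structures.
From mathcomp Require Import all_boot all_order all_algebra.
From mathcomp Require Import all_classical all_reals all_analysis.
From mathcomp Require Import ess_sup_inf.
Set Implicit Arguments. Unset Strict Implicit. Unset Printing Implicit Defensive.
Import Order.TTheory GRing.Theory Num.Def Num.Theory.
Import numFieldNormedType.Exports.
Local Open Scope classical_set_scope.
Local Open Scope ring_scope.

Definition point (d : nat) := 'rV[int]_d.
Definition unitv (d : nat) (i : 'I_d) : point d := delta_mx 0 i.
(* The undirected nearest-neighbour edge {x, x + e_i} is encoded as (x, i). *)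
Definition edge (d : nat) := (point d * 'I_d)%type.

(* Steps: Some (i, true) = +e_i, Some (i, false) = -e_i, None = zero step. *)
Definition step (d : nat) := option ('I_d * bool).

Definition step_vec (d : nat) (s : step d) : point d :=
  match s with
  | None => 0
  | Some (i, true) => unitv i
  | Some (i, false) => - unitv i
  end.

Definition step_weight (R : realType) (d : nat) (t : edge d -> R)
    (x : point d) (s : step d) : R :=
  match s with
  | None => 0
  | Some (i, true) => t (x, i)
  | Some (i, false) => t (x - unitv i, i)
  end.

Fixpoint path_end (d : nat) (x : point d) (p : seq (step d)) : point d :=
  match p with
  | [::] => x
  | s :: p' => path_end (x + step_vec s) p'
  end.

Fixpoint path_weight (R : realType) (d : nat) (t : edge d -> R)
    (x : point d) (p : seq (step d)) : R :=
  match p with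
  | [::] => 0
  | s :: p' => step_weight t x s + path_weight t (x + step_vec s) p'
  end.

(* Admissible steps: lazy = false means steps in R = {+-e_i};
   lazy = true means steps in R^o = R u {0}. *)
Definition admissible (d : nat) (lazy : bool) (p : seq (step d)) : bool :=
  lazy || all (fun s => s != None) p.

(* D_n (lazy = false) and D^o_n (lazy = true): points reachable from 0
   by admissible n-step paths. *)
Definition reachable (d : nat) (lazy : bool) (n : nat) (x : point d) : Prop :=
  exists p : n.-tuple (step d), admissible lazy p /\ path_end 0 p = x.

(* G_{0,(n),x} (lazy = false) and G^o_{0,(n),x} (lazy = true):
   minimal passage time over admissible n-step paths from 0 to x
   (+oo if there is none). *)
Definition passage (R : realType) (d : nat) (lazy : bool) (t : edge d -> R)
    (n : nat) (x : point d) : \bar R :=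
  \big[Order.min/+oo%E]_(p : n.-tuple (step d) |
        admissible lazy p && (path_end 0 p == x)) (path_weight t 0 p)%:E.

Definition l1 (R : realType) (d : nat) (xi : 'rV[R]_d) : R :=
  \sum_(i < d) `|xi 0 i|.

Definition to_real (R : realType) (d : nat) (x : point d) : 'rV[R]_d :=
  map_mx (fun z : int => z%:~R) x.

Definition origin_edges (d : nat) : seq (edge d) :=
  [seq (0, i) | i <- enum 'I_d] ++ [seq (- unitv i, i) | i <- enum 'I_d].

Definition iid_weights (R : realType) (dT : measure_display)
    (T : measurableType dT) (P : probability T R) (d : nat)
    (t : edge d -> T -> R) : Prop :=
  (forall e, measurable_fun setT (t e)) /\
  (forall e e' (B : set R), measurable B ->
      P (t e @^-1` B) = P (t e' @^-1` B)) /\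
  (forall (s : seq (edge d)) (B : edge d -> set R), uniq s ->
      (forall e, measurable (B e)) ->
      P (\big[setI/setT]_(e <- s) (t e @^-1` B e)) =
      \prod_(e <- s) P (t e @^-1` B e))%E.

Definition shape_limit (R : realType) (dT : measure_display)
    (T : measurableType dT) (P : probability T R) (d : nat)
    (t : edge d -> T -> R) (lazy : bool) (g : 'rV[R]_d -> R) : Prop :=
  {ae P, forall w, forall (xi : 'rV[R]_d) (alpha : R) (k : nat -> nat)
      (x : nat -> point d),
      l1 xi < alpha ->
      k @ \oo --> \oo ->
      (fun n => (k n)%:R / n%:R : R) @ \oo --> alpha ->
      (forall n, reachable lazy (k n) (x n)) ->
      (fun n => n%:R^-1 *: to_real R (x n)) @ \oo --> xi ->
      (fun n => (n%:R^-1)%:E * passage lazy (fun e => t e w) (k n) (x n))%E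
        @ \oo --> (alpha * g (alpha^-1 *: xi))%:E}.

Definition Uball (R : realType) (d : nat) : set 'rV[R]_d := [set xi | l1 xi <= 1].
Definition intU (R : realType) (d : nat) : set 'rV[R]_d := [set xi | l1 xi < 1].

Definition radial_ext (R : realType) (d : nat) (g : 'rV[R]_d -> R)
    (xi : 'rV[R]_d) : \bar R :=
  if l1 xi < 1 then (g xi)%:E
  else lim ((fun s : R => (g (s *: xi))%:E) @ at_left 1).

Definition convex_on_U (R : realType) (d : nat) (f : 'rV[R]_d -> \bar R) : Prop :=
  forall (xi zeta : 'rV[R]_d) (lam : R), Uball xi -> Uball zeta ->
    0 <= lam <= 1 ->
    (f (lam *: xi + (1 - lam) *: zeta)%R <= lam%:E * f xi + (1 - lam)%:E * f zeta)%E.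

Definition lsc_on_U (R : realType) (d : nat) (f : 'rV[R]_d -> \bar R) : Prop :=
  forall (xi : 'rV[R]_d) (a : R), Uball xi -> (a%:E < f xi)%E ->
    exists2 V, nbhs xi V & forall zeta, V zeta -> Uball zeta -> (a%:E < f zeta)%E.

(* Main.v *)
Require Import Defs.
From HB Require Import structures.
From mathcomp Require Import all_boot all_order all_algebra.
From mathcomp Require Import all_classical all_reals all_analysis.
From mathcomp Require Import ess_sup_inf.
Import Order.TTheory GRing.Theory Num.Def Num.Theory.
Import numFieldNormedType.Exports.
Local Open Scope classical_set_scope.
Local Open Scope ring_scope.
From mathcomp Require Import ring lra.
Set Implicit Arguments. Unset Strict Implicit. Unset Printing Implicit Defensive.

Lemma l1Z (R : realType) d (c : R) (x : 'rV[R]_d) : l1 (c *: x) = `|c| * l1 x.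
Proof. by rewrite /l1 mulr_sumr; apply: eq_bigr => i _; rewrite mxE normrM. Qed.

Lemma l1_ge0 (R : realType) d (x : 'rV[R]_d) : 0 <= l1 x.
Proof. by rewrite /l1; apply: sumr_ge0 => i _. Qed.

Lemma l1D (R : realType) d (x y : 'rV[R]_d) : l1 (x + y) <= l1 x + l1 y.
Proof.
rewrite /l1 -big_split /=; apply: ler_sum => i _; rewrite mxE; exact: ler_normD.
Qed.

Lemma l10 (R : realType) d : l1 (0 : 'rV[R]_d) = 0.
Proof. by rewrite /l1 big1 // => i _; rewrite mxE normr0. Qed.

Lemma intU0 (R : realType) d : intU (0 : 'rV[R]_d).
Proof. by rewrite /intU /= l10. Qed.

Lemma intU_scale (R : realType) d (x : 'rV[R]_d) (s : R) :
  Uball x -> `|s| < 1 -> intU (s *: x).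
Proof.
rewrite /Uball /intU /= l1Z => Ux s1.
have := l1_ge0 x => h.
have : `|s| * l1 x <= `|s| by rewrite ler_piMr.
move=> h2; exact: le_lt_trans h2 s1.
Qed.

Definition conv_intU (R : realType) d (f : 'rV[R]_d -> R) :=
  forall xi zeta (lam : R), intU xi -> intU zeta -> 0 <= lam <= 1 ->
     f (lam *: xi + (1 - lam) *: zeta) <= lam * f xi + (1 - lam) * f zeta.

Lemma q_mono (R : realType) d (f : 'rV[R]_d -> R) (cv : conv_intU f)
  (x : 'rV[R]_d) (s s' : R) : 0 < s -> s <= s' -> intU (s' *: x) ->
  (f (s *: x) - f 0) / s <= (f (s' *: x) - f 0) / s'.
Proof.
move=> s0 ss' Us'.
have s'0 : 0 < s' by exact: lt_le_trans ss'.
have lam01 : 0 <= s / s' <= 1.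
  apply/andP; split; first by rewrite divr_ge0 // ltW.
  by rewrite ler_pdivrMr // mul1r.
have := cv _ _ _ Us' (intU0 R d) lam01.
rewrite scaler0 addr0 scalerA divfK ?gt_eqF // => h.
have key : f (s *: x) - f 0 <= s / s' * (f (s' *: x) - f 0).
  have -> : s / s' * (f (s' *: x) - f 0) = s / s' * f (s' *: x) + (1 - s / s') * f 0 - f 0 by ring.
  lra.
have -> : (f (s' *: x) - f 0) / s' = (s / s' * (f (s' *: x) - f 0)) / s.
  by field; rewrite !gt_eqF.
by rewrite ler_pM2r // invr_gt0.
Qed.

Lemma l1_continuous (R : realType) d : continuous (@l1 R d).
Proof.
move=> x.
have := @cvg_big R 'I_d +%R 0 xpredT add_continuous _ (nbhs x) (index_enum _)
  (fun i (y : 'rV[R]_d) => `|y 0 i|) (fun i => `|x 0 i|) _.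
apply => i _.
apply: (@continuous_comp _ _ _ (fun y : 'rV[R]_d => y 0 i) normr).
  exact: coord_continuous.
exact: norm_continuous.
Qed.

Lemma open_intU (R : realType) d : open (@intU R d).
Proof.
have -> : @intU R d = (@l1 R d) @^-1` [set r | r < 1] by [].
apply: open_comp; last exact: open_lt.
by move=> x _; exact: l1_continuous.
Qed.

Lemma cont_at (R : realType) d (f : 'rV[R]_d -> R) :
  {within @intU R d, continuous f} -> forall x, intU x -> f @ x --> f x.
Proof.
rewrite continuous_open_subspace; last exact: open_intU.
by move=> h x Ux; apply: h; rewrite inE.
Qed.

Lemma psi_int (R : realType) d (f : 'rV[R]_d -> R) :
  {within @intU R d, continuous f} -> forall x, intU x ->
  (fun s : R => f (s *: x)) @ 1^'- --> f x.
Proof.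
move=> fc x Ux.
have h1 : (fun s : R => s *: x) @ 1^'- --> x.
  rewrite -[x in _ --> x]scale1r; apply: cvgZr_tmp.
  apply: cvg_at_left_filter; exact: cvg_id.
exact: (cvg_comp _ _ h1 (cont_at fc Ux)).
Qed.

Lemma EFin_cvg_to (R : realType) (T : Type) (F : set_system T) (FF : Filter F)
  (u : T -> R) (l : R) : u @ F --> l -> (fun x => (u x)%:E) @ F --> l%:E.
Proof. by move=> h; apply: cvg_EFin => //; exact: nearW. Qed.

Lemma psi_cvg (R : realType) d (f : 'rV[R]_d -> R) (cv : conv_intU f)
  (x : 'rV[R]_d) : Uball x -> cvg ((fun s : R => (f (s *: x))%:E) @ 1^'-).
Proof.
move=> Ux.
pose q (s : R) := (f (s *: x) - f 0) / s.
have qm : forall s s', 0 < s -> s <= s' -> s' < 1 -> q s <= q s'.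
  move=> s s' s0 ss' s'1; apply: q_mono => //; apply: intU_scale => //.
  by rewrite ger0_norm // ltW // (lt_le_trans s0 ss').
have psiE : forall s, s != 0 -> f (s *: x) = f 0 + s * q s.
  by move=> s s0; rewrite /q; field.
have [[M hM]|nb] := pselect (exists M, forall s, 0 < s < 1 -> q s <= M).
- have cq : cvg (q @ 1^'-).
    apply: nondecreasing_at_left_is_cvgr.
      near=> y => a b; rewrite !in_itv /= => /andP[ya a1] /andP[yb b1] ab.
      apply: qm => //; apply: lt_trans ya; near: y; exact: nbhs_left_gt.
    near=> y; exists M => z [s]; move=> /= hs <-; move: hs; rewrite in_itv /= => /andP[ys s1].
    apply: hM; rewrite s1 andbT; apply: lt_trans ys; near: y; exact: nbhs_left_gt.
  apply/cvg_ex; exists (f 0 + 1 * lim (q @ 1^'-))%:E.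
  apply: EFin_cvg_to.
  have h : (fun s => f 0 + s * q s) @ 1^'- --> f 0 + 1 * lim (q @ 1^'-).
    apply: cvgD; first exact: cvg_cst.
    apply: cvgM => //; apply: cvg_at_left_filter; exact: cvg_id.
  apply: cvg_trans h; apply: near_eq_cvg; near=> s.
  rewrite psiE // gt_eqF //; near: s; exact: nbhs_left_gt.
- apply/cvg_ex; exists +oo%E; apply/cvgeyPge => A.
  pose M := 2 * (`|A| + `|f 0|).
  have M0 : 0 <= M by rewrite /M mulr_ge0 // addr_ge0.
  have [s1 [s10 s11 hs1]] : exists s1, [/\ 0 < s1, s1 < 1 & M < q s1].
    apply: contra_notP nb => h; exists M => s /andP[s0 s1].
    by rewrite leNgt; apply/negP => hh; apply: h; exists s.
  near=> s.
  have ss1 : s1 < s by near: s; exact: nbhs_left_gt.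
  have sh : 1 / 2 < s by near: s; apply: nbhs_left_gt; lra.
  have s1' : s < 1 by near: s; exact: nbhs_left_lt.
  have qs : M < q s := lt_le_trans hs1 (qm _ _ s10 (ltW ss1) s1').
  rewrite lee_fin psiE; last by rewrite gt_eqF //; lra.
  have : M / 2 <= s * q s.
    have -> : M / 2 = 1 / 2 * M by rewrite mulrC mul1r.
    apply: ler_pM => //; [lra | exact: ltW].
  rewrite /M; have := ler_norm A; have := ler_norm (- f 0); rewrite normrN; lra.
Unshelve. all: by end_near.
Qed.

Lemma psi_to (R : realType) d (f : 'rV[R]_d -> R) (fc : {within @intU R d, continuous f})
  (cv : conv_intU f) (x : 'rV[R]_d) : Uball x ->
  (fun s : R => (f (s *: x))%:E) @ 1^'- --> radial_ext f x.
Proof.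
move=> Ux; rewrite /radial_ext; case: ifP => h.
  by apply: EFin_cvg_to; apply: psi_int.
exact: psi_cvg.
Qed.

Lemma radial_LB (R : realType) d (f : 'rV[R]_d -> R) (fc : {within @intU R d, continuous f})
  (cv : conv_intU f) (x : 'rV[R]_d) (s : R) : Uball x -> 0 < s < 1 ->
  ((f 0 + (f (s *: x) - f 0) / s)%:E <= radial_ext f x)%E.
Proof.
move=> Ux /andP[s0 s1].
pose q (s : R) := (f (s *: x) - f 0) / s.
have qm : forall s s', 0 < s -> s <= s' -> s' < 1 -> q s <= q s'.
  move=> a b a0 ab b1; apply: q_mono => //; apply: intU_scale => //.
  by rewrite ger0_norm // ltW // (lt_le_trans a0 ab).
have h : (fun t => (f 0 + t * q s)%:E) @ 1^'- --> (f 0 + q s)%:E.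
  apply: EFin_cvg_to.
  have -> : f 0 + q s = f 0 + 1 * q s by rewrite mul1r.
  apply: cvgD; first exact: cvg_cst.
  apply: cvgMr_tmp; apply: cvg_at_left_filter; exact: cvg_id.
apply: (lee_cvg_to h (psi_to fc cv Ux)).
near=> t.
have st : s < t by near: t; exact: nbhs_left_gt.
have t1 : t < 1 by near: t; exact: nbhs_left_lt.
have t0 : 0 < t by lra.
rewrite lee_fin.
have -> : f (t *: x) = f 0 + t * q t by rewrite /q; field; rewrite gt_eqF.
by rewrite lerD2l ler_pM2l // qm // ltW.
Unshelve. all: by end_near.
Qed.

Lemma radial_ge (R : realType) d (f : 'rV[R]_d -> R) (fc : {within @intU R d, continuous f})
  (cv : conv_intU f) (c : \bar R) (x : 'rV[R]_d) :
  (forall y, intU y -> (c <= (f y)%:E)%E) -> Uball x -> (c <= radial_ext f x)%E.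
Proof.
move=> hc Ux.
apply: (lee_cvg_to (cvg_cst c) (psi_to fc cv Ux)).
near=> s; apply: hc; apply: intU_scale => //.
have s0 : 0 < s by near: s; exact: nbhs_left_gt.
have s1 : s < 1 by near: s; exact: nbhs_left_lt.
by rewrite ger0_norm // ltW.
Unshelve. all: by end_near.
Qed.

Lemma radial_fin (R : realType) d (f : 'rV[R]_d -> R) (fc : {within @intU R d, continuous f})
  (cv : conv_intU f) (x : 'rV[R]_d) : Uball x ->
  exists c : R, (c%:E <= radial_ext f x)%E.
Proof.
move=> Ux; exists (f 0 + (f ((1/2) *: x) - f 0) / (1/2)).
apply: radial_LB => //; lra.
Qed.

Lemma radial_convex (R : realType) d (f : 'rV[R]_d -> R) (fc : {within @intU R d, continuous f})
  (cv : conv_intU f) : convex_on_U (radial_ext f).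
Proof.
move=> xi zeta lam Uxi Uzeta /andP[l0 l1].
have [->|lne0] := eqVneq lam 0.
  by rewrite scale0r add0r subr0 scale1r mul0e add0e mul1e.
have [->|lne1] := eqVneq lam 1.
  by rewrite scale1r subrr scale0r addr0 mul1e mul0e adde0.
have lp : 0 < lam by rewrite lt_neqAle eq_sym lne0.
have lq : lam < 1 by rewrite lt_neqAle lne1.
have Uw : Uball (lam *: xi + (1 - lam) *: zeta).
  rewrite /Uball /=; apply: le_trans (l1D _ _) _.
  rewrite !l1Z ger0_norm // ger0_norm ?subr_ge0 //.
  move: Uxi Uzeta; rewrite /Uball /= => h1 h2.
  have := ler_pM2l lp; have := l1_ge0 xi; have := l1_ge0 zeta; nra.
have [c1 hc1] := radial_fin fc cv Uxi.
have [c2 hc2] := radial_fin fc cv Uzeta.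
have l1p : 0 < 1 - lam by rewrite subr_gt0.
have Ey : forall r : R, 0 < r -> (r%:E * +oo = +oo)%E.
  by move=> r r0; rewrite mulry gtr0_sg // mul1e.
move: hc1 hc2 (psi_to fc cv Uxi) (psi_to fc cv Uzeta).
case: (radial_ext f xi) => [A| |]; case: (radial_ext f zeta) => [B| |] //;
  try by rewrite ?Ey // ?addye ?addey ?leey.
move=> _ _ hA hB.
have h2 : (fun s : R => (lam%:E * (f (s *: xi))%:E + (1 - lam)%:E * (f (s *: zeta))%:E)%E)
    @ 1^'- --> (lam%:E * A%:E + (1 - lam)%:E * B%:E)%E.
  apply: cvgeD; first exact: fin_num_adde_defl.
    exact: cvgeZl.
  exact: cvgeZl.
apply: (lee_cvg_to (psi_to fc cv Uw) h2).
near=> s.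
have s0 : 0 < s by near: s; exact: nbhs_left_gt.
have s1 : s < 1 by near: s; exact: nbhs_left_lt.
have ns : `|s| < 1 by rewrite ger0_norm // ltW.
rewrite -!EFinM -EFinD lee_fin.
have -> : s *: (lam *: xi + (1 - lam) *: zeta) = lam *: (s *: xi) + (1 - lam) *: (s *: zeta).
  by rewrite scalerDr !scalerA mulrC (mulrC s).
apply: cv; [exact: intU_scale|exact: intU_scale|by rewrite l0 ltW].
Unshelve. all: by end_near.
Qed.


Lemma radial_lsc (R : realType) d (f : 'rV[R]_d -> R) (fc : {within @intU R d, continuous f})
  (cv : conv_intU f) : lsc_on_U (radial_ext f).
Proof.
move=> xi a Uxi aF.
have [b [ab bF]] : exists b : R, a < b /\ (b%:E < radial_ext f xi)%E.
  move: aF; case: (radial_ext f xi) => [r| |] // ar.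
    by exists ((a + r) / 2); rewrite !lte_fin in ar *; split; lra.
  by exists (a + 1); split; [lra|exact: ltry].
have ev1 : \forall s \near 1^'-, (b%:E < (f (s *: xi))%:E)%E.
  move: (psi_to fc cv Uxi) => /(_ [set y | (b%:E < y)%E]); apply.
  apply: open_nbhs_nbhs; split => //.
  exact: open_ereal_gt_ereal.
have ev2 : \forall s \near 1^'-, a < f 0 + (b - f 0) / s.
  suff cv2 : (fun s : R => f 0 + (b - f 0) / s) @ 1^'- --> f 0 + (b - f 0) / 1.
    by rewrite divr1 addrCA subrr addr0 in cv2; exact: (cvgr_gt _ cv2 _ ab).
  apply: cvgD; first exact: cvg_cst.
  have hv : (fun s : R => s^-1) @ 1^'- --> (1:R)^-1.
    exact: (@cvgV R R (1^'-) _ id 1 (oner_neq0 _) (cvg_at_left_filter (cvg_id))).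
  exact: cvgMl_tmp hv.
near (1:R)^'- => s0.
have s00 : 0 < s0 by near: s0; exact: nbhs_left_gt.
have s01 : s0 < 1 by near: s0; exact: nbhs_left_lt.
have h1 : b < f (s0 *: xi) by rewrite -lte_fin; near: s0.
have h2 : a < f 0 + (b - f 0) / s0 by near: s0.
have Us0 : intU (s0 *: xi) by apply: intU_scale => //; rewrite ger0_norm // ltW.
have hc : (fun z => f 0 + (f (s0 *: z) - f 0) / s0) @ xi --> f 0 + (f (s0 *: xi) - f 0) / s0.
  have ? : Filter (nbhs xi) by exact: nbhs_pfilter.
  apply: cvgD; first exact: cvg_cst.
  apply: cvgMr_tmp; apply: cvgB; last exact: cvg_cst.
  apply: (cvg_comp (fun z => s0 *: z) f _ (cont_at fc Us0)).
  apply: cvgZl_tmp; exact: cvg_id.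
have lt1 : a < f 0 + (f (s0 *: xi) - f 0) / s0.
  apply: lt_le_trans h2 _; rewrite lerD2l ler_pM2r ?invr_gt0 //.
  by rewrite lerD2r ltW.
exists [set z | a < f 0 + (f (s0 *: z) - f 0) / s0].
  exact: (cvgr_gt _ hc).
move=> z /= hz Uz.
apply: lt_le_trans (radial_LB fc cv (s := s0) Uz _); first by rewrite lte_fin.
by rewrite s00 s01.
Unshelve. all: by end_near.
Qed.


Lemma invn_cvg0 (R : realType) : (fun n : nat => (n%:R : R)^-1) @ \oo --> 0.
Proof.
apply/cvgrPdist_lt => e e0.
near=> n; rewrite sub0r normrN ger0_norm ?invr_ge0 //.
have hn : (truncn e^-1 < n)%N by near: n; exact: nbhs_infty_gt.
have h1 : e^-1 < n%:R.
  apply: lt_le_trans (truncnS_gt _) _; rewrite ler_nat; exact: hn.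
have n0 : 0 < (n%:R : R) by apply: le_lt_trans h1; rewrite invr_ge0 ltW.
by rewrite -(invrK e) ltf_pV2 ?posrE ?invr_gt0.
Unshelve. all: by end_near.
Qed.

Lemma trunc_cvg (R : realType) (y : R) : 0 <= y ->
  (fun n : nat => (n%:R : R)^-1 * (truncn (n%:R * y))%:R) @ \oo --> y.
Proof.
move=> y0.
apply: (@squeeze_cvgr _ _ _ _ (fun n : nat => y - (n%:R : R)^-1) (fun _ => y)).
- near=> n.
  have n0 : (0 < (n%:R : R)) by rewrite ltr0n; near: n; exact: nbhs_infty_gt.
  have := @truncn_itv R (n%:R * y) (mulr_ge0 (ler0n _ _) y0).
  move=> /andP[h1 h2].
  apply/andP; split.
    rewrite ler_pdivlMl //. 
    rewrite mulrBr mulfV ?gt_eqF //.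
    move: h2; rewrite -natr1; lra.
  by rewrite ler_pdivrMl // mulrC (mulrC _ y) -(mulrC (n%:R)) .
- rewrite -[X in _ --> X]subr0; apply: cvgB; [exact: cvg_cst|exact: invn_cvg0].
- exact: cvg_cst.
Unshelve. all: by end_near.
Qed.

Lemma path_end_cat d (x : 'rV[int]_d) p1 p2 :
  path_end x (p1 ++ p2) = path_end (path_end x p1) p2.
Proof. by elim: p1 x => //= s p IH x; rewrite IH. Qed.

Lemma path_end_shift d (x : 'rV[int]_d) p : path_end x p = x + path_end 0 p.
Proof.
elim: p x => /= [|s p IH] x; first by rewrite addr0.
by rewrite IH (IH (0 + _)) add0r addrA.
Qed.

Lemma path_end_flatten d (X : Type) (r : seq X) (h : X -> seq (step d)) :
  path_end 0 (flatten [seq h j | j <- r]) = \sum_(j <- r) path_end 0 (h j).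
Proof.
elim: r => [|a r IH] /=; first by rewrite big_nil.
by rewrite path_end_cat path_end_shift IH big_cons.
Qed.

Lemma size_flatten_map (X : Type) (Y : Type) (r : seq X) (h : X -> seq Y) :
  size (flatten [seq h j | j <- r]) = (\sum_(j <- r) size (h j))%N.
Proof.
elim: r => [|a r IH] /=; first by rewrite big_nil.
by rewrite size_cat IH big_cons.
Qed.

Lemma path_end_nseq d a (s : step d) :
  path_end 0 (nseq a s) = (a%:Z) *: step_vec s.
Proof.
elim: a => [|a IH] /=; first by rewrite scale0r.
by rewrite path_end_shift IH add0r intS scalerDl scale1r.
Qed.

Lemma path_end_flatten_nseq d m (q : seq (step d)) :
  path_end 0 (flatten (nseq m q)) = (m%:Z) *: path_end 0 q.
Proof.
elim: m => [|m IH] /=; first by rewrite scale0r.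
by rewrite path_end_cat path_end_shift IH intS scalerDl scale1r.
Qed.

Lemma size_flatten_nseq (Y : Type) m (q : seq Y) :
  size (flatten (nseq m q)) = (m * size q)%N.
Proof. by elim: m => //= m IH; rewrite size_cat IH mulSn. Qed.

Lemma sv_entry d (j j' : 'I_d) (b : bool) :
  step_vec (Some (j, b)) 0 j' = (if b then 1 else -1) * (j == j')%:R.
Proof.
by case: b; rewrite /= /unitv ?mxE /= (eq_sym j') ?mul1r ?mulN1r.
Qed.

Definition acnt (R : realType) d (zeta : 'rV[R]_d) (n : nat) (j : 'I_d) : nat :=
  truncn (n%:R * `|zeta 0 j|).
Definition Scnt (R : realType) d (zeta : 'rV[R]_d) (n : nat) : nat :=
  (\sum_(j < d) acnt zeta n j)%N.
Definition mcnt (R : realType) d (zeta : 'rV[R]_d) (n : nat) : nat :=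
  ((n - Scnt zeta n)./2).+1.
Definition dirv (R : realType) d (zeta : 'rV[R]_d) (j : 'I_d) : step d :=
  Some (j, 0 <= zeta 0 j).
Definition ppath (R : realType) d (i0 : 'I_d) (zeta : 'rV[R]_d) (n : nat) : seq (step d) :=
  flatten [seq nseq (acnt zeta n j) (dirv zeta j) | j <- enum 'I_d] ++
  flatten (nseq (mcnt zeta n) [:: Some (i0, true); Some (i0, false)]).
Definition sgz (R : realType) d (zeta : 'rV[R]_d) (j : 'I_d) : int :=
  if 0 <= zeta 0 j then 1 else -1.

Lemma ppath_adm (R : realType) d (i0 : 'I_d) (zeta : 'rV[R]_d) n lazy :
  admissible lazy (ppath i0 zeta n).
Proof.
apply/orP; right; apply/allP => s; rewrite mem_cat => /orP[].
  by move=> /flattenP[q /mapP[j _ ->]] /nseqP[-> _].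
by move=> /flattenP[q /nseqP[-> _]]; rewrite !inE => /orP[] /eqP ->.
Qed.

Lemma ppath_size (R : realType) d (i0 : 'I_d) (zeta : 'rV[R]_d) n :
  size (ppath i0 zeta n) = (Scnt zeta n + 2 * mcnt zeta n)%N.
Proof.
rewrite /ppath size_cat size_flatten_map size_flatten_nseq /Scnt big_enum /=.
by rewrite mulnC; congr (_ + _)%N; apply: eq_bigr => j _; rewrite size_nseq.
Qed.

Lemma ppath_end (R : realType) d (i0 : 'I_d) (zeta : 'rV[R]_d) n (j : 'I_d) :
  path_end 0 (ppath i0 zeta n) 0 j = (acnt zeta n j)%:Z * sgz zeta j.
Proof.
rewrite /ppath path_end_cat path_end_shift path_end_flatten_nseq /= add0r addrN.
rewrite scaler0 addr0 path_end_flatten summxE big_enum /=.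
rewrite (bigD1 j) //= big1 ?addr0.
  by rewrite path_end_nseq mxE sv_entry eqxx mulr1.
move=> k kj; rewrite path_end_nseq mxE sv_entry.
by rewrite (negbTE kj) !mulr0.
Qed.

From mathcomp Require Import zify.

Lemma Scnt_le (R : realType) d (zeta : 'rV[R]_d) n : l1 zeta <= 1 -> (Scnt zeta n <= n)%N.
Proof.
move=> hz; rewrite -(ler_nat R) /Scnt natr_sum.
apply: (@le_trans _ _ (\sum_(j < d) n%:R * `|zeta 0 j|)).
  apply: ler_sum => j _; rewrite /acnt truncn_le mulr_ge0 //.
rewrite -mulr_sumr -[X in _ <= X]mulr1; apply: ler_wpM2l => //.
Qed.

Lemma ksize_bounds (R : realType) d (i0 : 'I_d) (zeta : 'rV[R]_d) n : l1 zeta <= 1 ->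
  (n < size (ppath i0 zeta n) <= n + 2)%N.
Proof.
move=> hz; rewrite ppath_size /mcnt.
have hS := Scnt_le n hz.
have e := odd_double_half (n - Scnt zeta n).
move: e; rewrite -mul2n.
set h := (_ - _)./2; set o := odd _.
case: o => /=; lia.
Qed.

Lemma ratio_cvg1 (R : realType) (k : nat -> nat) :
  (forall n, n < k n <= n + 2)%N -> (fun n => (k n)%:R / n%:R : R) @ \oo --> (1 : R).
Proof.
move=> hk.
apply: (@squeeze_cvgr _ _ _ _ (fun _ => 1) (fun n : nat => 1 + 2 * (n%:R : R)^-1)).
- near=> n.
  have n0 : (0 < (n%:R : R)) by rewrite ltr0n; near: n; exact: nbhs_infty_gt.
  have /andP[h1 h2] := hk n.
  have h1' : (n%:R : R) <= (k n)%:R by rewrite ler_nat ltnW.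
  have h2' : ((k n)%:R : R) <= n%:R + 2 by rewrite -natrD ler_nat.
  apply/andP; split; first by rewrite ler_pdivlMr // mul1r.
  rewrite ler_pdivrMr // mulrDl mul1r -mulrA mulVf ?gt_eqF // mulr1.
  by [].
- exact: cvg_cst.
- rewrite -[X in _ --> X]addr0; apply: cvgD; first exact: cvg_cst.
  rewrite -[X in _ --> X](mulr0 2); apply: cvgMl_tmp; exact: invn_cvg0.
Unshelve. all: by end_near.
Qed.

Lemma mx_cvg_entries (R : realType) d (u : nat -> 'rV[R]_d) (M : 'rV[R]_d) :
  (forall j, (fun n => u n 0 j) @ \oo --> M 0 j) -> u @ \oo --> M.
Proof.
move=> h A [P hP sPA].
have : \forall n \near \oo, forall i j, P i j (u n i j).
  apply: filter_forall => i; apply: filter_forall => j.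
  rewrite (ord1 i); exact: (h j _ (hP 0 j)).
by apply: filterS => n hn; apply: sPA.
Qed.

Lemma pw_ge (R : realType) d (lazy : bool) (tw : edge d -> R) (m : R) :
  (forall e, m <= tw e) -> (lazy -> m <= 0) ->
  forall x p, admissible lazy p -> (size p)%:R * m <= path_weight tw x p.
Proof.
move=> hm hl x p; elim: p x => [|s p IH] x /=; first by rewrite mul0r.
rewrite /admissible /= => hadm.
have hp : admissible lazy p.
  by move: hadm => /orP[hl'|/andP[_ ha]]; apply/orP; [left|right].
have hs : m <= step_weight tw x s.
  case: s hadm => [[i []]|] /= hadm; try exact: hm.
  by move: hadm; rewrite orbF => hz; exact: hl.
by rewrite -addn1 natrD mulrDl mul1r addrC lerD // IH.
Qed.

Lemma passage_ge (R : realType) d (lazy : bool) (tw : edge d -> R) (m : R) :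
  (forall e, m <= tw e) -> (lazy -> m <= 0) ->
  forall k x, (((k%:R * m)%:E) <= passage lazy tw k x)%E.
Proof.
move=> hm hl k x; rewrite /passage; apply: le_bigmin => [|p /andP[adm _]].
  exact: leey.
by have := pw_ge hm hl 0 adm; rewrite size_tuple lee_fin.
Qed.

Lemma lb_from_shape (R : realType) d (i0 : 'I_d) (lazy : bool) (tw : edge d -> R)
  (g : 'rV[R]_d -> R) (m : R) :
  (forall e, m <= tw e) -> (lazy -> m <= 0) ->
  (forall (xi : 'rV[R]_d) (alpha : R) (k : nat -> nat) (x : nat -> 'rV[int]_d),
      l1 xi < alpha ->
      k @ \oo --> \oo ->
      (fun n => (k n)%:R / n%:R : R) @ \oo --> alpha ->
      (forall n, reachable lazy (k n) (x n)) ->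
      (fun n => n%:R^-1 *: to_real R (x n)) @ \oo --> xi ->
      (fun n => (n%:R^-1)%:E * passage lazy tw (k n) (x n))%E
        @ \oo --> (alpha * g (alpha^-1 *: xi))%:E) ->
  forall zeta, intU zeta -> m <= g zeta.
Proof.
move=> hm hl hs zeta Uz.
pose k := fun n => size (ppath i0 zeta n).
pose x := fun n => path_end 0 (ppath i0 zeta n).
have hz1 : l1 zeta <= 1 by exact: ltW.
have hkb : forall n, (n < k n <= n + 2)%N := fun n => ksize_bounds i0 n hz1.
have kinf : k @ \oo --> \oo.
  apply/cvgnyPge => A; near=> n; have := hkb n.
  have : (A <= n)%N by near: n; exact: nbhs_infty_ge.
  lia.
have reach : forall n, reachable lazy (k n) (x n).
  by move=> n; exists (in_tuple (ppath i0 zeta n)); split => //; exact: ppath_adm.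
have xcvg : (fun n => n%:R^-1 *: to_real R (x n)) @ \oo --> zeta.
  apply: mx_cvg_entries => j.
  have -> : (fun n : nat => (n%:R^-1 *: to_real R (x n)) 0 j) =
      (fun n : nat => ((n%:R : R)^-1 * (acnt zeta n j)%:R) * (sgz zeta j)%:~R).
    by apply/funext => n; rewrite !mxE ppath_end intrM mulrA.
  have -> : zeta 0 j = `|zeta 0 j| * (sgz zeta j)%:~R.
    rewrite /sgz; case: ifP => h; first by rewrite mulr1 ger0_norm.
    by rewrite mulrN1 ltr0_norm ?opprK // ltNge h.
  apply: cvgMr_tmp; exact: trunc_cvg.
have H := hs zeta 1 k x Uz kinf (ratio_cvg1 hkb) reach xcvg.
rewrite invr1 scale1r mul1r in H.
have hlow : (fun n => (((k n)%:R / n%:R : R) * m)%:E) @ \oo --> (1 * m)%:E.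
  apply: EFin_cvg_to; apply: cvgMr_tmp; exact: ratio_cvg1.
rewrite -lee_fin -[X in (X%:E <= _)%E]mul1r.
apply: (lee_cvg_to hlow H).
near=> n.
have -> : (((k n)%:R / n%:R : R) * m)%:E = ((n%:R^-1)%:E * ((k n)%:R * m)%:E)%E.
  by rewrite -EFinM mulrA (mulrC (n%:R^-1)) mulrAC.
apply: lee_wpmul2l; first by rewrite lee_fin invr_ge0.
exact: passage_ge.
Unshelve. all: by end_near.
Qed.

Lemma ae_edges (R : realType) (dT : measure_display) (T : measurableType dT)
    (P : probability T R) (d : nat) (t : edge d -> T -> R) (e0 : edge d) :
  iid_weights P t ->
  \forall w \ae P, forall e, (ess_inf P (EFin \o t e0) <= (t e w)%:E)%E.
Proof.
move=> [hmeas [hid _]].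
set r0 := ess_inf P (EFin \o t e0).
pose B := [set y : R | (y%:E < r0)%E].
have mBg : forall z : \bar R, measurable [set y : R | (y%:E < z)%E].
  case => [r| |].
  - have -> : [set y : R | (y%:E < r%:E)%E] = `]-oo, r[%classic.
      by apply/seteqP; split => y /=; rewrite in_itv /= lte_fin.
    exact: measurable_itv.
  - have -> : [set y : R | (y%:E < +oo)%E] = setT.
      by apply/seteqP; split => y //= _; exact: ltry.
    exact: measurableT.
  - have -> : [set y : R | (y%:E < -oo)%E] = set0.
      by apply/seteqP; split => y //=; rewrite ltNge leNye.
    exact: measurable0.
have mB : measurable B := mBg r0.
have mpre : forall e, measurable (t e @^-1` B).
  by move=> e; have := hmeas e measurableT B mB; rewrite setTI.
have h0 : P (t e0 @^-1` B) = 0%E.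
  apply/(negligibleP _ (mpre e0)).
  have := ess_inf_le P (EFin \o t e0); rewrite -/r0.
  apply: negligibleS => w /=; rewrite /B /= => hw; apply/negP; rewrite -ltNge; exact: hw.
have he : forall e, \forall w \ae P, (r0 <= (t e w)%:E)%E.
  move=> e; exists (t e @^-1` B); split => //.
    by rewrite (hid e e0 B mB).
  by move=> w /= hw; rewrite /B /=; rewrite ltNge; apply/negP.
pose Q (n : nat) (w : T) := match @unpickle (edge d) n with
  | Some e => (r0 <= (t e w)%:E)%E | None => true end.
have : \forall w \ae P, forall n, Q n w.
  apply: ae_foralln => n; rewrite /Q; case: unpickle => [e|]; first exact: he.
  exact: aeW.
apply: filterS => w hw e; have := hw (pickle e); rewrite /Q pickleK; exact.
Qed.

Unset Implicit Arguments.

Theorem theorem2p10 (R : realType) (dT : measure_display) (T : measurableType dT)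
    (P : probability T R) (d : nat) (t : edge d -> T -> R) (e0 : edge d)
    (g go : 'rV[R]_d -> R) :
  (2 <= d)%N ->
  iid_weights P t ->
  (* r_0 = ess inf t(e) > -oo *)
  (-oo < ess_inf P (EFin \o t e0))%E ->
  (* E[(min{t_1^+, ..., t_{2d}^+})^d] < oo, the t_i being the i.i.d.
     weights of the 2d edges at the origin *)
  (\int[P]_w ((\big[Order.min/+oo]_(e <- origin_edges d)
                  (Num.max (t e w) 0)%:E) ^+ d) < +oo)%E ->
  (* g, g^o : the continuous convex shape functions on int U *)
  {within @intU R d, continuous g} -> {within @intU R d, continuous go} ->
  (forall xi zeta (lam : R), intU xi -> intU zeta -> 0 <= lam <= 1 ->
     g (lam *: xi + (1 - lam) *: zeta) <= lam * g xi + (1 - lam) * g zeta) ->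
  (forall xi zeta (lam : R), intU xi -> intU zeta -> 0 <= lam <= 1 ->
     go (lam *: xi + (1 - lam) *: zeta) <= lam * go xi + (1 - lam) * go zeta) ->
  shape_limit P t false g ->
  shape_limit P t true go ->
  (* the radial limits exist on the boundary |xi|_1 = 1 *)
  (forall xi : 'rV[R]_d, l1 xi = 1 ->
     cvg ((fun s : R => (g (s *: xi))%:E) @ at_left 1) /\
     cvg ((fun s : R => (go (s *: xi))%:E) @ at_left 1)) /\
  (* ranges: g : U -> [r0, oo], g^o : U -> [r0 /\ 0, oo] *)
  (forall xi, Uball xi ->
     (ess_inf P (EFin \o t e0) <= radial_ext g xi)%E /\
     (Order.min (ess_inf P (EFin \o t e0)) 0%:E <= radial_ext go xi)%E) /\
  (* convexity and lower semicontinuity on U *)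
  convex_on_U (radial_ext g) /\ lsc_on_U (radial_ext g) /\
  convex_on_U (radial_ext go) /\ lsc_on_U (radial_ext go).
Proof.
move=> hd iid hinf _ gc goc gcv gocv gs gos.
have cvg' : conv_intU g := gcv.
have cvo' : conv_intU go := gocv.
split.
  move=> xi hxi; have Ux : Uball xi by rewrite /Uball /= hxi.
  by split; apply: psi_cvg.
split; last first.
  split; first exact: radial_convex.
  split; first exact: radial_lsc.
  split; first exact: radial_convex.
  exact: radial_lsc.
have P0 : (0%R < P [set: T])%E by rewrite probability_setT lte01.
have PF := ae_properfilter_algebraOfSetsType P0.
have [w [hw [hgs hgos]]] := @filter_ex _ _ PF _ (filterI (ae_edges e0 iid) (filterI gs gos)).
have [r hr] : exists r : R, ess_inf P (EFin \o t e0) = r%:E.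
  move: hinf (hw e0); case: (ess_inf P (EFin \o t e0)) => [r| |] //.
  by exists r.
rewrite hr in hw *.
have d0 : (0 < d)%N by apply: leq_trans hd.
pose i0 : 'I_d := Ordinal d0.
have hm : forall e, r <= t e w by move=> e; rewrite -lee_fin; exact: hw.
have lb1 := @lb_from_shape R d i0 false (fun e => t e w) g r hm (fun h => ltac:(done)) hgs.
have hm2 : forall e, Num.min r 0 <= t e w.
  by move=> e; apply: le_trans (hm e); rewrite ge_min lexx.
have lb2 := @lb_from_shape R d i0 true (fun e => t e w) go (Num.min r 0) hm2
  (fun _ => ltac:(by rewrite ge_min lexx orbT)) hgos.
move=> xi Uxi; split.
  by apply: radial_ge => // y Uy; rewrite lee_fin; exact: lb1.
rewrite -EFin_min; apply: radial_ge => // y Uy; rewrite lee_fin; exact: lb2.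
Qed.
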